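(* Let $\mathfrak g=\mathfrak{gl}(1|2)$ and let $\zeta\in\mathcal I$ be regular, i.e. $a:=\zeta(E_{23})\ne0$. For $\lambda=\lambda_1\varepsilon_1+\lambda_2\varepsilon_2+\lambda_3\varepsilon_3\in\mathfrak h^*$ put $b:=\chi^{\bar0}_\lambda(\Omega)$ and $c:=\chi^{\bar0}_\lambda(z)$. The following are equivalent: (1) $\lambda$ is atypical; (2) $b=4(c^2-c)$; (3) $\widetilde M(\lambda,\zeta)$ is not simple.
   Context: $\mathfrak{gl}(1|2)$ is the Lie superalgebra of $3\times3$ complex matrices with $\mathbb Z_2$-grading in which index $1$ is even and indices $2,3$ are odd, with the super commutator; $E_{ij}$ are matrix units. $\mathfrak g_{\bar0}=\mathfrak g_0=\operatorname{span}\{E_{11},E_{22},E_{23},E_{32},E_{33}\}$, $\mathfrak g_1=\operatorname{span}\{E_{12},E_{13}\}$, $\mathfrak g_{-1}=\operatorname{span}\{E_{21},E_{31}\}$. $\mathfrak h$ = diagonal matrices, $\{\varepsilon_i\}$ the dual basis to $\{E_{ii}\}$; $\mathfrak n$ (resp. $\mathfrak n^-$) = strictly upper (resp. lower) triangular matrices; $\mathfrak b=\mathfrak h\oplus\mathfrak n$. Positive even root $\varepsilon_2-\varepsilon_3$, positive odd roots $\varepsilon_1-\varepsilon_2,\varepsilon_1-\varepsilon_3$; $\rho=\tfrac12(\varepsilon_2-\varepsilon_3)-\tfrac12(2\varepsilon_1-\varepsilon_2-\varepsilon_3)=-\varepsilon_1+\varepsilon_2$. Invariant form: $(\varepsilon_1,\varepsilon_1)=1$,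 $(\varepsilon_2,\varepsilon_2)=(\varepsilon_3,\varepsilon_3)=-1$, $(\varepsilon_i,\varepsilon_j)=0$ for $i\ne j$. $\lambda$ is atypical if $(\lambda+\rho,\beta)=0$ for some odd root $\beta$ (equivalently $(\lambda_1+\lambda_2)(\lambda_1+\lambda_3-1)=0$), typical otherwise. $\mathcal I=\{\zeta\in\mathfrak n^*\mid\zeta(\mathfrak n_{\bar1})=0\}$ (here $\mathfrak n_{\bar0}=\mathbb CE_{23}$). Set $e=E_{23}$, $f=E_{32}$, $H_0=E_{22}-E_{33}$, $\Omega:=4fe+H_0^2+2H_0$, $z:=E_{11}+\tfrac12(E_{22}+E_{33})$ (both central in $U(\mathfrak g_0)$); $\chi^{\bar0}_\lambda$ is the central character of $U(\mathfrak g_0)$ of the $\mathfrak g_0$-Verma module of highest weight $\lambda$ (with respect to $\mathfrak b_{\bar0}=\mathfrak h+\mathbb CE_{23}$). For regular $\zeta$: $M(\lambda,\zeta):=U(\mathfrak g_0)/\operatorname{Ker}(\chi^{\bar0}_\lambda)U(\mathfrak g_0)\otimes_{U(\mathbb Ce)}\mathbb C_\zeta$ and $\widetilde M(\lambda,\zeta):=U(\mathfrak g)\otimes_{U(\mathfrak g_0\oplus\mathfrak g_1)}M(\lambda,\zeta)$ with $\mathfrak g_1$ acting by zero. *)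

(* Defs.v *)
(* Indices are 0-based: ordinal 0,1,2 of 'I_3 correspond to the paper's
   indices 1,2,3.  Index 0 is even, indices 1,2 are odd. *)
From HB Require Import structures.
From mathcomp Require Import all_boot all_order all_algebra.
Set Implicit Arguments.
Unset Strict Implicit.
Unset Printing Implicit Defensive.
Import Order.TTheory GRing.Theory Num.Theory.
Local Open Scope ring_scope.

Section GL12.
Variable C : numClosedFieldType.

Definition ipar (i : 'I_3) : bool := i != 0%N :> nat.
Definition epar (i j : 'I_3) : bool := ipar i (+) ipar j.
Definition ssign (i j k l : 'I_3) : C :=
  if epar i j && epar k l then -1 else 1.

(* A representation of gl(1|2) (equivalently a U(gl(1|2))-module) on V:
   rho i j is the action of the matrix unit E_ij, and the super bracket
   [E_ij, E_kl] = d_jk E_il - (-1)^{|E_ij||E_kl|} d_li E_kj is respected. *)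
Definition is_rep (V : lmodType C) (rho : 'I_3 -> 'I_3 -> {linear V -> V}) :=
  forall (i j k l : 'I_3) (x : V),
    rho i j (rho k l x) - ssign i j k l *: rho k l (rho i j x)
    = (if j == k then rho i l x else 0)
      - ssign i j k l *: (if l == i then rho k j x else 0).

Definition i0 : 'I_3 := @Ordinal 3 0 isT.
Definition i1 : 'I_3 := @Ordinal 3 1 isT.
Definition i2 : 'I_3 := @Ordinal 3 2 isT.

(* e = E_23, f = E_32, H0 = E_22 - E_33, Omega = 4fe + H0^2 + 2H0,
   z = E_11 + 1/2 (E_22 + E_33), acting through rho *)
Definition act_e (V : lmodType C) (rho : 'I_3 -> 'I_3 -> {linear V -> V}) (x : V) := rho i1 i2 x.
Definition act_f (V : lmodType C) (rho : 'I_3 -> 'I_3 -> {linear V -> V}) (x : V) := rho i2 i1 x.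
Definition act_H0 (V : lmodType C) (rho : 'I_3 -> 'I_3 -> {linear V -> V}) (x : V) :=
  rho i1 i1 x - rho i2 i2 x.
Definition act_Omega (V : lmodType C) (rho : 'I_3 -> 'I_3 -> {linear V -> V}) (x : V) :=
  4%:R *: act_f rho (act_e rho x) + act_H0 rho (act_H0 rho x)
  + 2%:R *: act_H0 rho x.
Definition act_z (V : lmodType C) (rho : 'I_3 -> 'I_3 -> {linear V -> V}) (x : V) :=
  rho i0 i0 x + 2%:R^-1 *: (rho i1 i1 x + rho i2 i2 x).

Definition weight := 'I_3 -> C.

Definition wform (mu nu : weight) : C :=
  mu i0 * nu i0 - mu i1 * nu i1 - mu i2 * nu i2.
Definition eps (i : 'I_3) : weight := fun k => if k == i then 1 else 0.
Definition wadd (mu nu : weight) : weight := fun k => mu k + nu k.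
Definition wsub (mu nu : weight) : weight := fun k => mu k - nu k.
Definition rho_w : weight := wsub (eps i1) (eps i0).
Definition odd_root (beta : weight) : Prop :=
  exists i j : 'I_3, ipar i != ipar j /\ beta = wsub (eps i) (eps j).
Definition atypical (lam : weight) : Prop :=
  exists beta, odd_root beta /\ wform (wadd lam rho_w) beta = 0.

(* Central character chi^0_lambda of the g_0-Verma module of highest weight
   lambda (w.r.t. b_0 = h + C E_23), evaluated on the central elements used.
   It is the scalar by which the element acts on the highest weight vector
   (see the lemmas chi0_*_spec below, which justify these values). *)
Definition chi0_E11 (lam : weight) : C := lam i0.
Definition chi0_E22E33 (lam : weight) : C := lam i1 + lam i2.
Definition chi0_Omega (lam : weight) : C :=
  (lam i1 - lam i2) ^+ 2 + 2%:R * (lam i1 - lam i2).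
Definition chi0_z (lam : weight) : C := lam i0 + 2%:R^-1 * (lam i1 + lam i2).

Definition hw_vector (V : lmodType C) (rho : 'I_3 -> 'I_3 -> {linear V -> V}) (lam : weight)
  (v : V) :=
  act_e rho v = 0 /\ forall k, rho k k v = lam k *: v.

Lemma chi0_Omega_spec (V : lmodType C) (rho : 'I_3 -> 'I_3 -> {linear V -> V}) lam v :
  hw_vector rho lam v -> act_Omega rho v = chi0_Omega lam *: v.
Proof.
move=> [he hk]; rewrite /act_Omega he /act_f linear0 scaler0 add0r.
have hH : act_H0 rho v = (lam i1 - lam i2) *: v.
  by rewrite /act_H0 !hk scalerBl.
have hH' : forall k : C, act_H0 rho (k *: v) = k *: act_H0 rho v.
  by move=> k; rewrite /act_H0 scalerBr !linearZ.
rewrite hH hH' hH scalerA scalerA -scalerDl /chi0_Omega.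
by rewrite expr2 (mulrC 2%:R).
Qed.

Lemma chi0_z_spec (V : lmodType C) (rho : 'I_3 -> 'I_3 -> {linear V -> V}) lam v :
  hw_vector rho lam v -> act_z rho v = chi0_z lam *: v.
Proof.
move=> [_ hk]; rewrite /act_z !hk -scalerDl scalerA -scalerDl.
by [].
Qed.

(* Relations satisfied by the generator 1 (x) 1 of
   Mtilde(lam,zeta) = U(g) (x)_{U(g_0 + g_1)} M(lam,zeta), where
   a = zeta(E_23): g_1 = span{E_12, E_13} acts by zero, e acts by a, and
   Ker chi^0_lam, generated by E_11 - chi(E_11), E_22+E_33 - chi(E_22+E_33),
   Omega - chi(Omega) (Z(U(g_0)) = C[E_11, E_22+E_33, Omega]), annihilates it. *)
Definition whittaker_rel (V : lmodType C) (rho : 'I_3 -> 'I_3 -> {linear V -> V})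
  (lam : weight) (a : C) (v : V) :=
  [/\ rho i0 i1 v = 0, rho i0 i2 v = 0, act_e rho v = a *: v,
      rho i0 i0 v = chi0_E11 lam *: v &
   [/\ 
rho i1 i1 v + rho i2 i2 v = chi0_E22E33 lam *: v
    & act_Omega rho v = chi0_Omega lam *: v]].

Definition submodule (V : lmodType C) (rho : 'I_3 -> 'I_3 -> {linear V -> V}) (S : V -> Prop) :=
  [/\ S 0, (forall x y, S x -> S y -> S (x + y)),
      (forall (k : C) x, S x -> S (k *: x))
    & (forall i j x, S x -> S (rho i j x))].

Definition simple_module (V : lmodType C) (rho : 'I_3 -> 'I_3 -> {linear V -> V}) :=
  (exists x : V, x != 0) /\
  forall S, submodule rho S -> (forall x, S x -> x = 0) \/ (forall x, S x).

(* (V, rho, v) is (a model of) Mtilde(lam, zeta): the gl(1|2)-module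
   U(g)/U(g)J freely generated by v subject to whittaker_rel, i.e. v generates
   V and every module with a vector satisfying the relations receives a
   module map sending v to the given vector. *)
Definition is_Mtilde (V : lmodType C) (rho : 'I_3 -> 'I_3 -> {linear V -> V})
  (lam : weight) (a : C) (v : V) :=
  [/\ is_rep rho, whittaker_rel rho lam a v,
      (forall S, submodule rho S -> S v -> forall x, S x)
    & forall (W : lmodType C) (sigma : 'I_3 -> 'I_3 -> {linear W -> W}) (w : W),
        is_rep sigma -> whittaker_rel sigma lam a w ->
        exists phi : {linear V -> W},
          phi v = w /\ forall i j x, phi (rho i j x) = sigma i j (phi x)].

End GL12.

(* Main.v *)
Require Import Defs.
From HB Require Import structures.
From mathcomp Require Import all_boot all_order all_algebra.
From mathcomp Require Import boolp functions.
From mathcomp Require Import ring.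
From Stdlib Require Import Classical.
Import GRing.Theory Num.Theory.
Local Open Scope ring_scope.

Lemma ord3 (i : 'I_3) : i = i0 \/ i = i1 \/ i = i2.
Proof.
case: i => [[|[|[|//]]] Hi]; [left|right;left|right;right]; exact: val_inj.
Qed.

Section Model.
Variable C : numClosedFieldType.
Variables (a : C) (lam : weight C).
Hypothesis a0 : a != 0.

Local Notation W := (nat -> C -> C^o).
Let l0 := lam i0.
Let s := lam i1 + lam i2.
Let b := chi0_Omega lam.
Let q (t : C) : C := (b - t * t - 2%:R * t) / (4%:R * a).
Let h2 : C := 2%:R^-1.

Lemma scaleE (k : C) (x : W) n t : (k *: x) n t = k * x n t.
Proof. by []. Qed.
Lemma addE (x y : W) n t : (x + y) n t = x n t + y n t.
Proof. by []. Qed.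

Definition Aop (p r : nat) (g : C -> C^o) (t : C) : C :=
 match p, r with
 | 0,0 => l0 * g t
 | 1,1 => (s + t) * h2 * g t
 | 2,2 => (s - t) * h2 * g t
 | 1,2 => a * g (t - 2%:R)
 | 2,1 => q t * g (t + 2%:R)
 | _,_ => 0 end.

Definition sigf (i j : nat) (x : W) : W := fun n t =>
 match i, j with
 | 0,0 => match n with 0 => l0 * x 0%N t | 1 => l0 * x 1%N t - x 1%N t
          | 2 => l0 * x 2%N t - x 2%N t | 3 => l0 * x 3%N t - 2%:R * x 3%N t | _ => 0 end
 | 1,0 => match n with 1 => x 0%N t | 3 => x 2%N t | _ => 0 end
 | 2,0 => match n with 2 => x 0%N t | 3 => - x 1%N t | _ => 0 end
 | 0,1 => match n with
          | 0 => Aop 0 0 (x 1%N) t + Aop 1 1 (x 1%N) t + Aop 2 1 (x 2%N) t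
          | 1 => - Aop 2 1 (x 3%N) t
          | 2 => Aop 0 0 (x 3%N) t + Aop 1 1 (x 3%N) t - x 3%N t
          | _ => 0 end
 | 0,2 => match n with
          | 0 => Aop 1 2 (x 1%N) t + Aop 0 0 (x 2%N) t + Aop 2 2 (x 2%N) t
          | 1 => x 3%N t - Aop 0 0 (x 3%N) t - Aop 2 2 (x 3%N) t
          | 2 => Aop 1 2 (x 3%N) t
          | _ => 0 end
 | p, r => match n with
          | 0 => Aop p r (x 0%N) t
          | 1 => Aop p r (x 1%N) t + (if p == 1%N then x r t else 0)
          | 2 => Aop p r (x 2%N) t + (if p == 2%N then x r t else 0)
          | 3 => Aop p r (x 3%N) t + (if p == r then x 3%N t else 0)
          | _ => 0 end
 end.

Lemma sigf_lin (i j : 'I_3) : linear (sigf i j).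
Proof.
move=> k x y; apply/funext => n; apply/funext => t.
rewrite addE scaleE /sigf /Aop !addE !scaleE.
case: i => [[|[|[|//]]] ?]; case: j => [[|[|[|//]]] ?];
  (case: n => [|[|[|[|n]]]]) => /=; try ring.
Qed.

HB.instance Definition _ (i j : 'I_3) :=
  GRing.isLinear.Build C W W *:%R (sigf i j) (sigf_lin i j).
Definition sigma (i j : 'I_3) : {linear W -> W} := sigf i j.

Lemma subE (x y : W) n t : (x - y) n t = x n t - y n t.
Proof. by []. Qed.
Lemma oppE (x : W) n t : (- x) n t = - x n t.
Proof. by []. Qed.
Lemma zeroE n t : (0 : W) n t = 0.
Proof. by []. Qed.

Lemma sigma_rep : is_rep sigma.
Proof.
move=> i j k l x; apply/funext => n; apply/funext => t.
rewrite !subE !scaleE.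
case: i => [[|[|[|//]]] ?]; case: j => [[|[|[|//]]] ?];
case: k => [[|[|[|//]]] ?]; case: l => [[|[|[|//]]] ?];
rewrite /ssign /epar /ipar /= ?zeroE /sigma /sigf /Aop /= ;
  (case: n => [|[|[|[|n]]]]) => /=; rewrite ?subrK ?addrK ?zeroE; try ring.
all: rewrite /q /h2; field.
all: by rewrite ?a0.
Qed.

Definition wv : W := fun n t => if n is 0%N then 1 else 0.

Lemma wv_rel : whittaker_rel sigma lam a wv.
Proof.
rewrite /whittaker_rel /act_Omega /act_e /act_f /act_H0 /chi0_E11 /chi0_E22E33.
split; [| | | | split];
 apply/funext => n; apply/funext => t;
 rewrite /sigma; do 4 (rewrite ?addE ?subE ?oppE ?scaleE ?zeroE /sigf /Aop /=);
 (case: n => [|[|[|[|n]]]]) => /=; rewrite ?subrK ?addrK ?zeroE; try ring.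
all: rewrite /l0 /s /q /b /h2 /chi0_Omega; field.
all: by rewrite ?a0.
Qed.

Lemma wv_top : sigma i1 i0 (sigma i2 i0 wv) != 0.
Proof.
apply/eqP => /(congr1 (fun x : W => x 3%N 0)).
by rewrite zeroE /sigma /sigf /= => /eqP; rewrite oner_eq0.
Qed.

Definition kap : C := - ((lam i0 + lam i1) * (lam i0 + lam i2 - 1)).

Lemma wv_Q : sigma i0 i1 (sigma i0 i2 (sigma i1 i0 (sigma i2 i0 wv))) = kap *: wv.
Proof.
apply/funext => n; apply/funext => t.
rewrite /sigma; do 4 (rewrite ?addE ?subE ?oppE ?scaleE ?zeroE /sigf /Aop /=).
case: n => [|[|[|[|n]]]] /=; rewrite ?subrK ?addrK ?zeroE; try ring.
rewrite /kap /l0 /s /q /b /h2 /chi0_Omega; field.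
by rewrite ?a0.
Qed.

End Model.
Section Abs.
Variable C : numClosedFieldType.
Variables (a : C) (lam : weight C) (V : lmodType C)
  (rho : 'I_3 -> 'I_3 -> {linear V -> V}) (v : V).
Hypothesis a0 : a != 0.
Hypothesis Hrep : is_rep rho.
Hypothesis Hwh : whittaker_rel rho lam a v.

Lemma rel i j k l x : rho i j (rho k l x) = ssign C i j k l *: rho k l (rho i j x)
   + ((if j == k then rho i l x else 0) - ssign C i j k l *: (if l == i then rho k j x else 0)).
Proof. by rewrite -Hrep addrC subrK. Qed.

Ltac rl i j k l := rewrite (rel i j k l) /ssign /epar /ipar /=.
Ltac simp := rewrite ?(scaler0, scale1r, scaleN1r, subr0, addr0, sub0r, add0r, opprK, oppr0, linear0, scale0r).

Local Notation hV := (act_H0 rho).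

Lemma uNu (u : V) : u = - u -> u = 0.
Proof.
move=> H; have : u + u = 0 by rewrite {2}H subrr.
rewrite -mulr2n -scaler_nat => /eqP; rewrite scaler_eq0 pnatr_eq0 /=.
by move/eqP.
Qed.

Lemma Y1Y1 x : rho i1 i0 (rho i1 i0 x) = 0.
Proof. by apply: uNu; move: (rel i1 i0 i1 i0 x); rewrite /ssign /epar /ipar /=; simp. Qed.
Lemma Y2Y2 x : rho i2 i0 (rho i2 i0 x) = 0.
Proof. by apply: uNu; move: (rel i2 i0 i2 i0 x); rewrite /ssign /epar /ipar /=; simp. Qed.
Lemma X1X1 x : rho i0 i1 (rho i0 i1 x) = 0.
Proof. by apply: uNu; move: (rel i0 i1 i0 i1 x); rewrite /ssign /epar /ipar /=; simp. Qed.
Lemma X2X2 x : rho i0 i2 (rho i0 i2 x) = 0.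
Proof. by apply: uNu; move: (rel i0 i2 i0 i2 x); rewrite /ssign /epar /ipar /=; simp. Qed.
Lemma Y2Y1 x : rho i2 i0 (rho i1 i0 x) = - rho i1 i0 (rho i2 i0 x).
Proof. by move: (rel i2 i0 i1 i0 x); rewrite /ssign /epar /ipar /=; simp. Qed.
Lemma X2X1 x : rho i0 i2 (rho i0 i1 x) = - rho i0 i1 (rho i0 i2 x).
Proof. by move: (rel i0 i2 i0 i1 x); rewrite /ssign /epar /ipar /=; simp. Qed.

Definition dd (i j : 'I_3) : C :=
  (j == i1)%:R - (i == i1)%:R - (j == i2)%:R + (i == i2)%:R.

Lemma modid (p q z : V) (al be ga de : C) :
  p + (al *: z - be *: z) - (q + (ga *: z - de *: z))
  = (p - q) + (al - be - ga + de) *: z.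
Proof.
rewrite !scalerDl !scaleNr -!scalerBl opprD addrACA; congr (_ + _).
by rewrite -scalerBl -scalerDl; congr (_ *: _); ring.
Qed.

Lemma hcomm i j y : rho i j (hV y) = hV (rho i j y) + dd i j *: rho i j y.
Proof.
rewrite /act_H0 linearB (rel i j i1 i1) (rel i j i2 i2).
have ->: ssign C i j i1 i1 = 1 by rewrite /ssign /epar /ipar /= andbF.
have ->: ssign C i j i2 i2 = 1 by rewrite /ssign /epar /ipar /= andbF.
rewrite !scale1r.
have F : forall k, (if j == k then rho i k y else 0) = (j == k)%:R *: rho i j y.
  by move=> k; case: eqP => [->|_]; rewrite ?scale1r ?scale0r.
have G : forall k, (if k == i then rho k j y else 0) = (i == k)%:R *: rho i j y.
  by move=> k; case: eqP => [->|/eqP]; rewrite ?eqxx ?scale1r // eq_sym => /negbTE ->; rewrite scale0r.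
by rewrite !F !G modid.
Qed.


Lemma rD i j x y : rho i j (x + y) = rho i j x + rho i j y.
Proof. exact: linearD. Qed.
Lemma rZ i j k x : rho i j (k *: x) = k *: rho i j x.
Proof. exact: linearZ. Qed.
Lemma rN i j x : rho i j (- x) = - rho i j x.
Proof. exact: linearN. Qed.
Lemma rB i j x y : rho i j (x - y) = rho i j x - rho i j y.
Proof. exact: linearB. Qed.
Lemma r0 i j : rho i j 0 = 0.
Proof. exact: linear0. Qed.

Lemma hV_add x y : hV (x + y) = hV x + hV y.
Proof. by rewrite /act_H0 !rD opprD addrACA. Qed.
Lemma hV_scale k x : hV (k *: x) = k *: hV x.
Proof. by rewrite /act_H0 !rZ scalerBr. Qed.
Lemma hV0 : hV 0 = 0.
Proof. by rewrite /act_H0 !r0 subr0. Qed.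

Definition lclosed (P : V -> Prop) :=
  [/\ P 0, forall x y, P x -> P y -> P (x + y) & forall k x, P x -> P (k *: x)].
Lemma lc_zero P : lclosed P -> P 0. Proof. by case. Qed.
Lemma lc_add P : lclosed P -> forall x y, P x -> P y -> P (x + y). Proof. by case. Qed.
Lemma lc_scale P : lclosed P -> forall k x, P x -> P (k *: x). Proof. by case. Qed.
Lemma lc_opp P : lclosed P -> forall x, P x -> P (- x).
Proof. by move=> HP x Hx; rewrite -scaleN1r; apply: lc_scale. Qed.

Arguments lc_zero {P}. Arguments lc_add {P}. Arguments lc_scale {P}. Arguments lc_opp {P}.
Ltac mem HP := repeat match goal with
 | |- _ (_ + _) => apply: (lc_add HP)
 | |- _ (- _) => apply: (lc_opp HP)
 | |- _ (_ *: _) => apply: (lc_scale HP)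
 | |- _ 0 => apply: (lc_zero HP)
 end.

Fixpoint bb (k : nat) : V :=
  match k with 0 => v | k'.+1 => hV (bb k') + (2 * k')%:R *: bb k' end.
Fixpoint Tn (n : nat) (x : V) : Prop :=
  match n with 0 => x = 0 | n'.+1 => exists c y, Tn n' y /\ x = y + c *: bb n' end.
Definition T0 x := exists n, Tn n x.

Lemma Tn0 n : Tn n 0.
Proof. by elim: n => [//|n IH] /=; exists 0, 0; rewrite scale0r addr0. Qed.
Lemma TnS n x : Tn n x -> Tn n.+1 x.
Proof. by move=> H; exists 0, x; rewrite scale0r addr0. Qed.
Lemma Tn_le n m x : (n <= m)%N -> Tn n x -> Tn m x.
Proof.
move=> /subnKC <-; elim: (m - n)%N => [|k IH]; first by rewrite addn0.
by move=> H; rewrite addnS; apply: TnS; apply: IH.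
Qed.
Lemma Tn_add n x y : Tn n x -> Tn n y -> Tn n (x + y).
Proof.
elim: n x y => [x y /= -> ->|n IH x y]; first by rewrite addr0.
move=> [c [x' [Hx ->]]] [c' [y' [Hy ->]]]; exists (c + c'), (x' + y'); split.
  exact: IH.
by rewrite scalerDl addrACA.
Qed.
Lemma Tn_scale n k x : Tn n x -> Tn n (k *: x).
Proof.
elim: n x => [x /= ->|n IH x]; first by rewrite scaler0.
move=> [c [x' [Hx ->]]]; exists (k * c), (k *: x'); split; first exact: IH.
by rewrite scalerDr scalerA.
Qed.

Lemma T0_lc : lclosed T0.
Proof.
split; first by exists 0%N.
  move=> x y [n Hx] [m Hy]; exists (maxn n m); apply: Tn_add.
    exact: (Tn_le _ _ _ (leq_maxl n m) Hx).
  exact: (Tn_le _ _ _ (leq_maxr n m) Hy).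
by move=> k x [n Hx]; exists n; apply: Tn_scale.
Qed.

Lemma T0_b k : T0 (bb k).
Proof. by exists k.+1, 1, 0; split; [exact: Tn0 | rewrite scale1r add0r]. Qed.
Lemma T0_v : T0 v.
Proof. exact: (T0_b 0). Qed.

Lemma hV_b k : hV (bb k) = bb k.+1 - (2 * k)%:R *: bb k.
Proof. by rewrite /= addrK. Qed.

Lemma T0_h x : T0 x -> T0 (hV x).
Proof.
move=> [n]; elim: n x => [x /= ->|n IH x]; first by rewrite hV0; exists 0%N.
move=> [c [y [Hy ->]]]; rewrite hV_add hV_scale hV_b.
by apply: (lc_add T0_lc); [apply: IH | mem T0_lc; apply: T0_b].
Qed.

Lemma T0_op (f : {linear V -> V}) d :
  (forall y, f (hV y) = hV (f y) + d *: f y) -> T0 (f v) ->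
  forall x, T0 x -> T0 (f x).
Proof.
move=> Hf Hv.
have Hb : forall k, T0 (f (bb k)).
  elim=> [//|k IH] /=; rewrite (linearD f) (linearZZ f) Hf.
  by mem T0_lc => //; apply: T0_h.
move=> x [n]; elim: n x => [x /= ->|n IH x]; first by rewrite (linear0 f); exists 0%N.
move=> [c [y [Hy ->]]]; rewrite (linearD f) (linearZZ f).
by mem T0_lc => //; apply: IH.
Qed.

Lemma T0_op0 (f : {linear V -> V}) d :
  (forall y, f (hV y) = hV (f y) + d *: f y) -> f v = 0 ->
  forall x, T0 x -> f x = 0.
Proof.
move=> Hf Hv.
have Hb : forall k, f (bb k) = 0.
  elim=> [//|k IH] /=; rewrite (linearD f) (linearZZ f) Hf IH hV0.
  by rewrite !scaler0 !addr0.
move=> x [n]; elim: n x => [x /= ->|n IH x]; first by rewrite (linear0 f).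
by move=> [c [y [Hy ->]]]; rewrite (linearD f) (linearZZ f) Hb IH // scaler0 addr0.
Qed.


Lemma X1v : rho i0 i1 v = 0. Proof. by case: Hwh. Qed.
Lemma X2v : rho i0 i2 v = 0. Proof. by case: Hwh. Qed.
Lemma ev : rho i1 i2 v = a *: v. Proof. by case: Hwh. Qed.
Lemma E00v : rho i0 i0 v = lam i0 *: v. Proof. by case: Hwh. Qed.
Lemma Esv : rho i1 i1 v + rho i2 i2 v = (lam i1 + lam i2) *: v.
Proof. by case: Hwh => _ _ _ _ []. Qed.
Lemma Omv : act_Omega rho v = chi0_Omega lam *: v.
Proof. by case: Hwh => _ _ _ _ []. Qed.

Lemma E11v_eq : rho i1 i1 v = 2%:R^-1 *: ((rho i1 i1 v + rho i2 i2 v) + hV v).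
Proof.
rewrite /act_H0 addrACA subrr addr0 -mulr2n -scaler_nat scalerA mulVf ?scale1r //.
by rewrite pnatr_eq0.
Qed.

Lemma T0_E11v : T0 (rho i1 i1 v).
Proof. rewrite E11v_eq Esv; mem T0_lc; [exact: T0_v | apply: T0_h; exact: T0_v]. Qed.

Lemma T0_E22v : T0 (rho i2 i2 v).
Proof.
have -> : rho i2 i2 v = (rho i1 i1 v + rho i2 i2 v) - rho i1 i1 v by rewrite addrAC subrr add0r.
rewrite Esv; mem T0_lc; [exact: T0_v | exact: T0_E11v].
Qed.

Lemma fv_eq : 4%:R *: (a *: rho i2 i1 v) =
   chi0_Omega lam *: v - (hV (hV v) + 2%:R *: hV v).
Proof. by rewrite -Omv /act_Omega /act_f /act_e ev rZ -[X in X - _]addrA addrK. Qed.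

Lemma T0_fv : T0 (rho i2 i1 v).
Proof.
have -> : rho i2 i1 v = (4%:R * a)^-1 *: (4%:R *: (a *: rho i2 i1 v)).
  by rewrite !scalerA mulVf ?scale1r // mulf_neq0 // pnatr_eq0.
rewrite fv_eq; mem T0_lc; try exact: T0_v; do ?apply: T0_h; exact: T0_v.
Qed.

Lemma g0T0 i j x : ipar i = ipar j -> T0 x -> T0 (rho i j x).
Proof.
move=> Hp Hx; apply: (T0_op (rho i j) (dd i j)) => //; first exact: hcomm.
case: (ord3 i) (ord3 j) => [->|[->|->]] [->|[->|->]] in Hp *; try discriminate.
- rewrite E00v; mem T0_lc; exact: T0_v.
- exact: T0_E11v.
- rewrite ev; mem T0_lc; exact: T0_v.
- exact: T0_fv.
- exact: T0_E22v.
Qed.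

Lemma X1T0 x : T0 x -> rho i0 i1 x = 0.
Proof. exact: (T0_op0 (rho i0 i1) (dd i0 i1) (hcomm i0 i1) X1v). Qed.
Lemma X2T0 x : T0 x -> rho i0 i2 x = 0.
Proof. exact: (T0_op0 (rho i0 i2) (dd i0 i2) (hcomm i0 i2) X2v). Qed.


Definition T1 x := exists t1 t2, [/\ T0 t1, T0 t2 & x = rho i1 i0 t1 + rho i2 i0 t2].
Definition T2 x := exists t, T0 t /\ x = rho i1 i0 (rho i2 i0 t).

Lemma T1_lc : lclosed T1.
Proof.
split.
- by exists 0, 0; split; try exact: (lc_zero T0_lc); rewrite !r0 addr0.
- move=> x y [t1 [t2 [H1 H2 ->]]] [u1 [u2 [K1 K2 ->]]].
  exists (t1 + u1), (t2 + u2); split; try exact: (lc_add T0_lc).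
  by rewrite !rD addrACA.
- move=> k x [t1 [t2 [H1 H2 ->]]]; exists (k *: t1), (k *: t2).
  by split; try exact: (lc_scale T0_lc); rewrite !rZ scalerDr.
Qed.

Lemma T2_lc : lclosed T2.
Proof.
split.
- by exists 0; split; [exact: (lc_zero T0_lc) | rewrite !r0].
- move=> x y [t [H ->]] [u [K ->]]; exists (t + u); split; first exact: (lc_add T0_lc).
  by rewrite !rD.
- move=> k x [t [H ->]]; exists (k *: t); split; first exact: (lc_scale T0_lc).
  by rewrite !rZ.
Qed.

Lemma T1_Y1 t : T0 t -> T1 (rho i1 i0 t).
Proof. by move=> H; exists t, 0; split; rewrite ?r0 ?addr0 //; exact: (lc_zero T0_lc). Qed.
Lemma T1_Y2 t : T0 t -> T1 (rho i2 i0 t).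
Proof. by move=> H; exists 0, t; split; rewrite ?r0 ?add0r //; exact: (lc_zero T0_lc). Qed.
Lemma T2_at t : T0 t -> T2 (rho i1 i0 (rho i2 i0 t)).
Proof. by move=> H; exists t. Qed.

Ltac at0 := first [assumption | exact: T0_v | apply: g0T0; [by [] | at0] | apply: T0_h; at0].

Ltac casesij i j Hp := case: (ord3 i) (ord3 j) => [->|[->|->]] [->|[->|->]] in Hp *; try discriminate;
   rewrite /ssign /epar /ipar /=.

Lemma g0T1 i j x : ipar i = ipar j -> T1 x -> T1 (rho i j x).
Proof.
move=> Hp [t1 [t2 [H1 H2 ->]]]; rewrite rD (rel i j i1 i0) (rel i j i2 i0).
casesij i j Hp; simp; mem T1_lc; first [apply: T1_Y1 | apply: T1_Y2]; at0.
Qed.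

Ltac pushY := rewrite ?(rD, rZ, rN, r0, Y1Y1, Y2Y2, Y2Y1, X1X1, X2X2).

Lemma g0T2 i j x : ipar i = ipar j -> T2 x -> T2 (rho i j x).
Proof.
move=> Hp [t [H ->]]; rewrite (rel i j i1 i0) (rel i j i2 i0).
casesij i j Hp; simp; pushY; simp; mem T2_lc; apply: T2_at; at0.
Qed.

Lemma Y1T1 x : T1 x -> T2 (rho i1 i0 x).
Proof. move=> [t1 [t2 [H1 H2 ->]]]; pushY; simp; exact: T2_at. Qed.
Lemma Y2T1 x : T1 x -> T2 (rho i2 i0 x).
Proof. move=> [t1 [t2 [H1 H2 ->]]]; pushY; simp; mem T2_lc; exact: T2_at. Qed.
Lemma Y1T2 x : T2 x -> rho i1 i0 x = 0.
Proof. by move=> [t [H ->]]; pushY. Qed.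
Lemma Y2T2 x : T2 x -> rho i2 i0 x = 0.
Proof. by move=> [t [H ->]]; pushY; simp. Qed.

Lemma X1T1 x : T1 x -> T0 (rho i0 i1 x).
Proof.
move=> [t1 [t2 [H1 H2 ->]]]; rewrite rD (rel i0 i1 i1 i0) (rel i0 i1 i2 i0) !X1T0 //.
rewrite /ssign /epar /ipar /=; simp; mem T0_lc; at0.
Qed.
Lemma X2T1 x : T1 x -> T0 (rho i0 i2 x).
Proof.
move=> [t1 [t2 [H1 H2 ->]]]; rewrite rD (rel i0 i2 i1 i0) (rel i0 i2 i2 i0) !X2T0 //.
rewrite /ssign /epar /ipar /=; simp; mem T0_lc; at0.
Qed.

Ltac at1 := first [apply: T1_Y1; at0 | apply: T1_Y2; at0 | apply: g0T1; [by [] | at1]].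

Lemma X1T2 x : T2 x -> T1 (rho i0 i1 x).
Proof.
move=> [t [H ->]]; rewrite (rel i0 i1 i1 i0) (rel i0 i1 i2 i0) X1T0 //.
rewrite /ssign /epar /ipar /=; simp; pushY; simp; mem T1_lc; at1.
Qed.
Lemma X2T2 x : T2 x -> T1 (rho i0 i2 x).
Proof.
move=> [t [H ->]]; rewrite (rel i0 i2 i1 i0) (rel i0 i2 i2 i0) X2T0 //.
rewrite /ssign /epar /ipar /=; simp; pushY; simp; mem T1_lc; at1.
Qed.


Definition TT x := exists x0 x1 x2, [/\ T0 x0, T1 x1, T2 x2 & x = x0 + x1 + x2].

Lemma TT_lc : lclosed TT.
Proof.
split.
- exists 0, 0, 0; split; rewrite ?addr0 //; [exact: (lc_zero T0_lc)|exact: (lc_zero T1_lc)|exact: (lc_zero T2_lc)].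
- move=> x y [x0 [x1 [x2 [H0 H1 H2 ->]]]] [y0 [y1 [y2 [K0 K1 K2 ->]]]].
  exists (x0 + y0), (x1 + y1), (x2 + y2); split.
  + exact: (lc_add T0_lc).
  + exact: (lc_add T1_lc).
  + exact: (lc_add T2_lc).
  + by rewrite addrACA [x0 + x1 + (y0 + y1)]addrACA.
- move=> k x [x0 [x1 [x2 [H0 H1 H2 ->]]]]; exists (k *: x0), (k *: x1), (k *: x2); split.
  + exact: (lc_scale T0_lc).
  + exact: (lc_scale T1_lc).
  + exact: (lc_scale T2_lc).
  + by rewrite !scalerDr.
Qed.

Lemma TT0 x : T0 x -> TT x.
Proof.
move=> H; exists x, 0, 0; split; rewrite ?addr0 //; [exact: (lc_zero T1_lc)|exact: (lc_zero T2_lc)].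
Qed.
Lemma TT1 x : T1 x -> TT x.
Proof.
move=> H; exists 0, x, 0; split; rewrite ?addr0 ?add0r //; [exact: (lc_zero T0_lc)|exact: (lc_zero T2_lc)].
Qed.
Lemma TT2 x : T2 x -> TT x.
Proof.
move=> H; exists 0, 0, x; split; rewrite ?add0r //; [exact: (lc_zero T0_lc)|exact: (lc_zero T1_lc)].
Qed.

Lemma TT_sub : submodule rho TT.
Proof.
split; [exact: (lc_zero TT_lc) | exact: (lc_add TT_lc) | exact: (lc_scale TT_lc) |].
move=> i j x [x0 [x1 [x2 [H0 H1 H2 ->]]]]; rewrite !rD.
case: (ord3 i) (ord3 j) => [->|[->|->]] [->|[->|->]].
- mem TT_lc; [apply: TT0; exact: g0T0 | apply: TT1; exact: g0T1 | apply: TT2; exact: g0T2].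
- rewrite (X1T0 _ H0) add0r; mem TT_lc; [apply: TT0; exact: X1T1 | apply: TT1; exact: X1T2].
- rewrite (X2T0 _ H0) add0r; mem TT_lc; [apply: TT0; exact: X2T1 | apply: TT1; exact: X2T2].
- rewrite (Y1T2 _ H2) addr0; mem TT_lc; [apply: TT1; exact: T1_Y1 | apply: TT2; exact: Y1T1].
- mem TT_lc; [apply: TT0; exact: g0T0 | apply: TT1; exact: g0T1 | apply: TT2; exact: g0T2].
- mem TT_lc; [apply: TT0; exact: g0T0 | apply: TT1; exact: g0T1 | apply: TT2; exact: g0T2].
- rewrite (Y2T2 _ H2) addr0; mem TT_lc; [apply: TT1; exact: T1_Y2 | apply: TT2; exact: Y2T1].
- mem TT_lc; [apply: TT0; exact: g0T0 | apply: TT1; exact: g0T1 | apply: TT2; exact: g0T2].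
- mem TT_lc; [apply: TT0; exact: g0T0 | apply: TT1; exact: g0T1 | apply: TT2; exact: g0T2].
Qed.

Lemma TT_v : TT v.
Proof. apply: TT0; exact: T0_v. Qed.


Definition lc4 (pk : nat -> V) (x y z w : C) : V :=
  x *: pk 0%N + y *: pk 1%N + z *: pk 2%N + w *: pk 3%N.
Lemma lcA pk x y z w x' y' z' w' :
  lc4 pk x y z w + lc4 pk x' y' z' w' = lc4 pk (x + x') (y + y') (z + z') (w + w').
Proof.
rewrite /lc4 !scalerDl addrACA; congr (_ + _); rewrite addrACA; congr (_ + _).
by rewrite addrACA.
Qed.
Lemma lcN pk x y z w : - lc4 pk x y z w = lc4 pk (- x) (- y) (- z) (- w).
Proof. by rewrite /lc4 !scaleNr !opprD. Qed.
Lemma lcZ pk k x y z w : k *: lc4 pk x y z w = lc4 pk (k * x) (k * y) (k * z) (k * w).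
Proof. by rewrite /lc4 !scalerDr !scalerA. Qed.
Lemma lc0 pk : (0 : V) = lc4 pk 0 0 0 0.
Proof. by rewrite /lc4 !scale0r !addr0. Qed.
Lemma lcE pk x y z w x' y' z' w' : x = x' -> y = y' -> z = z' -> w = w' ->
  lc4 pk x y z w = lc4 pk x' y' z' w'.
Proof. by move=> -> -> -> ->. Qed.

Ltac lcfin pk := rewrite ?lcN ?lcZ ?lcA ?lcN ?lcZ ?lcA ?lcN ?lcZ ?lcA ?lcN ?lcZ ?lcA;
   apply: lcE.
Ltac lcnorm1 u1 :=
  let pk := fresh "pk" in
  pose pk := (fun n : nat => match n with 0 => u1 | _ => 0 end);
  rewrite (_ : u1 = lc4 pk 1 0 0 0); last (by rewrite /lc4 /pk /=; simp);
  rewrite ?(lc0 pk); lcfin pk.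
Ltac lcnorm2 u1 u2 :=
  let pk := fresh "pk" in
  pose pk := (fun n : nat => match n with 0 => u1 | 1 => u2 | _ => 0 end);
  rewrite (_ : u1 = lc4 pk 1 0 0 0); last (by rewrite /lc4 /pk /=; simp);
  rewrite (_ : u2 = lc4 pk 0 1 0 0); last (by rewrite /lc4 /pk /=; simp);
  rewrite ?(lc0 pk); lcfin pk.
Ltac lcnorm3 u1 u2 u3 :=
  let pk := fresh "pk" in
  pose pk := (fun n : nat => match n with 0 => u1 | 1 => u2 | 2 => u3 | _ => 0 end);
  rewrite (_ : u1 = lc4 pk 1 0 0 0); last (by rewrite /lc4 /pk /=; simp);
  rewrite (_ : u2 = lc4 pk 0 1 0 0); last (by rewrite /lc4 /pk /=; simp);
  rewrite (_ : u3 = lc4 pk 0 0 1 0); last (by rewrite /lc4 /pk /=; simp);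
  rewrite ?(lc0 pk); lcfin pk.

Lemma bbS k : bb k.+1 = hV (bb k) + (2 * k)%:R *: bb k.
Proof. by []. Qed.

Definition cc (k : nat) : C := - (2%:R * a * k%:R).

Lemma dd12 : dd i1 i2 = - 2%:R.
Proof. rewrite /dd /=; ring. Qed.

Lemma e_bb k : rho i1 i2 (bb k.+1) = a *: bb k.+1 + cc k.+1 *: bb k.
Proof.
elim: k => [|k IH].
  rewrite bbS rD rZ hcomm ev hV_scale /cc /dd /=.
  lcnorm2 (hV v) v; rewrite /= ; ring.
rewrite [bb k.+2]bbS rD rZ hcomm IH hV_add !hV_scale !hV_b /cc dd12.
lcnorm3 (bb k.+2) (bb k.+1) (bb k); rewrite /=; ring.
Qed.


Definition Nf x := rho i1 i2 x - a *: x.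
Lemma Nf_add x y : Nf (x + y) = Nf x + Nf y.
Proof. by rewrite /Nf rD scalerDr opprD addrACA. Qed.
Lemma Nf_scale k x : Nf (k *: x) = k *: Nf x.
Proof. by rewrite /Nf rZ scalerBr !scalerA mulrC. Qed.
Lemma Nf0 : Nf 0 = 0.
Proof. by rewrite /Nf r0 scaler0 subr0. Qed.
Lemma Nf_v : Nf v = 0.
Proof. by rewrite /Nf ev subrr. Qed.
Lemma Nf_bb k : Nf (bb k.+1) = cc k.+1 *: bb k.
Proof. by rewrite /Nf e_bb addrAC subrr add0r. Qed.

Lemma iN_add n x y : iter n Nf (x + y) = iter n Nf x + iter n Nf y.
Proof. by elim: n => [//|n IH] /=; rewrite IH Nf_add. Qed.
Lemma iN_scale n k x : iter n Nf (k *: x) = k *: iter n Nf x.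
Proof. by elim: n => [//|n IH] /=; rewrite IH Nf_scale. Qed.
Lemma iN0 n : iter n Nf 0 = 0.
Proof. by elim: n => [//|n IH] /=; rewrite IH Nf0. Qed.

Fixpoint KK (k : nat) : C := match k with 0 => 1 | k'.+1 => cc k * KK k' end.

Lemma KK_neq0 k : KK k != 0.
Proof.
elim: k => [|k IH] /=; first exact: oner_neq0.
rewrite mulf_neq0 // /cc oppr_eq0 !mulf_neq0 //; by rewrite pnatr_eq0.
Qed.

Lemma iN_bb k : iter k Nf (bb k) = KK k *: v.
Proof.
elim: k => [|k IH]; first by rewrite scale1r.
by rewrite iterSr Nf_bb iN_scale IH scalerA.
Qed.

Lemma iN_bb0 k m : (k < m)%N -> iter m Nf (bb k) = 0.
Proof.
elim: k m => [|k IH] [|m] // Hm.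
  by rewrite iterSr (_ : Nf (bb 0) = 0) ?iN0 //; exact: Nf_v.
by rewrite iterSr Nf_bb iN_scale IH // scaler0.
Qed.

Lemma iN_Tn n x : Tn n x -> iter n Nf x = 0.
Proof.
elim: n x => [x /= -> //|n IH x [c [y [Hy ->]]]].
by rewrite iN_add iN_scale iN_bb0 // iterS IH // Nf0 scaler0 addr0.
Qed.

Lemma YY_Nf z : rho i1 i0 (rho i2 i0 (Nf z)) = Nf (rho i1 i0 (rho i2 i0 z)).
Proof.
rewrite /Nf (rel i1 i2 i1 i0) (rel i1 i2 i2 i0) /ssign /epar /ipar /=; simp.
by pushY; simp.
Qed.

Lemma iN_YY n z : iter n Nf (rho i1 i0 (rho i2 i0 z)) = rho i1 i0 (rho i2 i0 (iter n Nf z)).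
Proof. by elim: n => [//|n IH] /=; rewrite IH YY_Nf. Qed.

Lemma sub_scale S : submodule rho S -> forall k x, S x -> S (k *: x).
Proof. by case. Qed.
Lemma sub_add S : submodule rho S -> forall x y, S x -> S y -> S (x + y).
Proof. by case. Qed.
Lemma sub_rho S : submodule rho S -> forall i j x, S x -> S (rho i j x).
Proof. by case. Qed.
Arguments sub_scale {S}. Arguments sub_add {S}. Arguments sub_rho {S}.
Lemma sub_Nf S : submodule rho S -> forall x, S x -> S (Nf x).
Proof.
move=> HS x Hx; rewrite /Nf; apply: (sub_add HS); first exact: (sub_rho HS).
by rewrite -scaleN1r; do 2 apply: (sub_scale HS).
Qed.
Lemma sub_iN S : submodule rho S -> forall n x, S x -> S (iter n Nf x).
Proof. by move=> HS; elim=> [//|n IH] x Hx /=; apply: (sub_Nf _ HS); apply: IH. Qed.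

Lemma lowering S : submodule rho S -> forall n x, Tn n x ->
  S (rho i1 i0 (rho i2 i0 x)) -> x = 0 \/ S (rho i1 i0 (rho i2 i0 v)).
Proof.
move=> HS; elim=> [x /= -> _|n IH x [c [y [Hy ->]]] HSx]; first by left.
case: (eqVneq c 0) => [c0|c0].
  by move: HSx; rewrite c0 scale0r addr0 => /(IH _ Hy).
right.
have := sub_iN _ HS n _ HSx.
rewrite iN_YY iN_add iN_scale iN_bb (iN_Tn _ _ Hy) add0r scalerA rZ !rZ => H.
have := sub_scale HS (c * KK n)^-1 _ H.
by rewrite scalerA mulVf ?scale1r // mulf_neq0 // KK_neq0.
Qed.


Lemma kerN (vn0 : v != 0) n x : Tn n x -> Nf x = 0 -> exists c, x = c *: v.
Proof.
elim: n x => [x /= -> _|n IH x [c [y [Hy ->]]] HN]; first by exists 0; rewrite scale0r.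
case: n IH y Hy HN => [|n] IH y Hy HN.
  by exists c; move: Hy => /= ->; rewrite add0r.
have H : iter n.+1 Nf (y + c *: bb n.+1) = 0 by rewrite iterSr HN iN0.
move: H; rewrite iN_add iN_scale iN_bb (iN_Tn n.+1 _ Hy) add0r scalerA => /eqP.
rewrite scaler_eq0 (negbTE vn0) orbF mulf_eq0 (negbTE (KK_neq0 _)) orbF => /eqP c0.
apply: IH => //; by move: HN; rewrite c0 scale0r addr0.
Qed.

Definition Q x := rho i0 i1 (rho i0 i2 (rho i1 i0 (rho i2 i0 x))).
Lemma Q_add x y : Q (x + y) = Q x + Q y. Proof. by rewrite /Q !rD. Qed.
Lemma Q_scale k x : Q (k *: x) = k *: Q x. Proof. by rewrite /Q !rZ. Qed.
Lemma Q0 : Q 0 = 0. Proof. by rewrite /Q !r0. Qed.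

Lemma rhc i j x k y : rho i j (hV x + k *: y) = rho i j (hV x) + k *: rho i j y.
Proof. by rewrite linearD linearZ. Qed.
Lemma comb (w : V) k l : hV w + k *: w + l *: w = hV w + (k + l) *: w.
Proof. by rewrite -addrA -scalerDl. Qed.
Lemma Q_h y : Q (hV y) = hV (Q y).
Proof.
rewrite /Q (hcomm i2 i0) rhc (hcomm i1 i0) comb rhc (hcomm i0 i2) comb rhc (hcomm i0 i1) comb.
rewrite (_ : dd i0 i1 + _ = 0) ?scale0r ?addr0 //.
rewrite /dd /=; ring.
Qed.

Lemma e_Q z : rho i1 i2 (Q z) = Q (rho i1 i2 z).
Proof.
rewrite /Q (rel i1 i2 i0 i1) (rel i1 i2 i0 i2) (rel i1 i2 i1 i0) (rel i1 i2 i2 i0).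
rewrite /ssign /epar /ipar /=; simp; pushY; simp; done.
Qed.

Lemma Nf_Q z : Nf (Q z) = Q (Nf z).
Proof. by rewrite /Nf e_Q /Q !rB !rZ. Qed.

Lemma QT0 t : T0 t -> T0 (Q t).
Proof. by move=> H; apply: X1T1; apply: X2T2; apply: Y1T1; apply: T1_Y2. Qed.

Lemma Q_T0 c : Q v = c *: v -> forall x, T0 x -> Q x = c *: x.
Proof.
move=> Hv.
have Hb : forall k, Q (bb k) = c *: bb k.
  elim=> [//|k IH]; rewrite bbS Q_add Q_scale Q_h IH hV_scale.
  by rewrite [in RHS]scalerDr [in RHS]scalerA [in LHS]scalerA (mulrC c).
move=> x [n]; elim: n x => [x /= ->|n IH x [d [y [Hy ->]]]]; first by rewrite Q0 scaler0.
by rewrite Q_add Q_scale Hb IH // scalerDr !scalerA (mulrC c).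
Qed.

Lemma Qv_ex (vn0 : v != 0) : exists c, Q v = c *: v.
Proof.
have [n Hn] := QT0 _ T0_v.
by apply: (kerN vn0 n) => //; rewrite Nf_Q Nf_v Q0.
Qed.


Lemma E00_Y1 z : rho i0 i0 (rho i1 i0 z) = rho i1 i0 (rho i0 i0 z) - rho i1 i0 z.
Proof. by rewrite (rel i0 i0 i1 i0) /ssign /epar /ipar /=; simp. Qed.
Lemma E00_Y2 z : rho i0 i0 (rho i2 i0 z) = rho i2 i0 (rho i0 i0 z) - rho i2 i0 z.
Proof. by rewrite (rel i0 i0 i2 i0) /ssign /epar /ipar /=; simp. Qed.
Lemma E00_X1 z : rho i0 i0 (rho i0 i1 z) = rho i0 i1 (rho i0 i0 z) + rho i0 i1 z.
Proof. by rewrite (rel i0 i0 i0 i1) /ssign /epar /ipar /=; simp. Qed.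
Lemma E00_X2 z : rho i0 i0 (rho i0 i2 z) = rho i0 i2 (rho i0 i0 z) + rho i0 i2 z.
Proof. by rewrite (rel i0 i0 i0 i2) /ssign /epar /ipar /=; simp. Qed.

Lemma dd00 : dd i0 i0 = 0.
Proof. rewrite /dd /=; ring. Qed.

Lemma E00_bb k : rho i0 i0 (bb k) = lam i0 *: bb k.
Proof.
elim: k => [|k IH]; first exact: E00v.
rewrite bbS rhc hcomm IH hV_scale dd00.
rewrite scale0r addr0 [in RHS]scalerDr [in RHS]scalerA [in LHS]scalerA.
by rewrite (mulrC (lam i0)).
Qed.

Lemma E00_T0 x : T0 x -> rho i0 i0 x = lam i0 *: x.
Proof.
move=> [n]; elim: n x => [x /= ->|n IH x [d [y [Hy ->]]]]; first by rewrite r0 scaler0.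
by rewrite rD rZ E00_bb IH // scalerDr !scalerA (mulrC d).
Qed.

Lemma E00_T2 z : T2 z -> rho i0 i0 z = (lam i0 - 2%:R) *: z.
Proof.
move=> [t [Ht ->]]; rewrite E00_Y1 E00_Y2 E00_T0 // rB !rZ.
lcnorm1 (rho i1 i0 (rho i2 i0 t)); ring.
Qed.

Definition T3 x := exists z0 z1 z2,
  [/\ T2 z0, T2 z1, T2 z2 & x = z0 + rho i0 i1 z1 + rho i0 i2 z2].

Lemma T3_lc : lclosed T3.
Proof.
split.
- by exists 0, 0, 0; split; rewrite ?r0 ?addr0 //; exact: (lc_zero T2_lc).
- move=> x y [x0 [x1 [x2 [H0 H1 H2 ->]]]] [y0 [y1 [y2 [K0 K1 K2 ->]]]].
  exists (x0 + y0), (x1 + y1), (x2 + y2); split; try exact: (lc_add T2_lc).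
  by rewrite !rD addrACA [x0 + _ + (y0 + _)]addrACA.
- move=> k x [x0 [x1 [x2 [H0 H1 H2 ->]]]]; exists (k *: x0), (k *: x1), (k *: x2).
  by split; try exact: (lc_scale T2_lc); rewrite !rZ !scalerDr.
Qed.

Lemma T3_0 z : T2 z -> T3 z.
Proof. by move=> H; exists z, 0, 0; split; rewrite ?r0 ?addr0 //; exact: (lc_zero T2_lc). Qed.
Lemma T3_1 z : T2 z -> T3 (rho i0 i1 z).
Proof. by move=> H; exists 0, z, 0; split; rewrite ?r0 ?add0r ?addr0 //; exact: (lc_zero T2_lc). Qed.
Lemma T3_2 z : T2 z -> T3 (rho i0 i2 z).
Proof. by move=> H; exists 0, 0, z; split; rewrite ?r0 ?add0r ?addr0 //; exact: (lc_zero T2_lc). Qed.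

Ltac at2 := first [assumption | apply: g0T2; [by [] | at2]].

Lemma XXT2 (Qz : forall t, T0 t -> Q t = 0) z : T2 z -> rho i0 i1 (rho i0 i2 z) = 0.
Proof. by move=> [t [Ht ->]]; apply: Qz. Qed.

Lemma T3_sub (Qz : forall t, T0 t -> Q t = 0) : submodule rho T3.
Proof.
split; [exact: (lc_zero T3_lc) | exact: (lc_add T3_lc) | exact: (lc_scale T3_lc) |].
move=> i j x [x0 [x1 [x2 [H0 H1 H2 ->]]]]; rewrite !rD.
case: (ord3 i) (ord3 j) => [->|[->|->]] [->|[->|->]].
- rewrite (rel i0 i0 i0 i1) (rel i0 i0 i0 i2) /ssign /epar /ipar /=; simp.
  mem T3_lc; first [apply: T3_1; at2 | apply: T3_2; at2 | apply: T3_0; at2].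
- rewrite X1X1 (XXT2 Qz _ H2); simp; mem T3_lc; apply: T3_1; at2.
- rewrite X2X1 (XXT2 Qz _ H1) X2X2; simp; mem T3_lc; apply: T3_2; at2.
- rewrite (rel i1 i0 i0 i1) (rel i1 i0 i0 i2) (Y1T2 _ H0) (Y1T2 _ H1) (Y1T2 _ H2).
  rewrite /ssign /epar /ipar /=; simp; mem T3_lc; apply: T3_0; at2.
- rewrite (rel i1 i1 i0 i1) (rel i1 i1 i0 i2) /ssign /epar /ipar /=; simp.
  mem T3_lc; first [apply: T3_1; at2 | apply: T3_2; at2 | apply: T3_0; at2].
- rewrite (rel i1 i2 i0 i1) (rel i1 i2 i0 i2) /ssign /epar /ipar /=; simp.
  mem T3_lc; first [apply: T3_1; at2 | apply: T3_2; at2 | apply: T3_0; at2].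
- rewrite (rel i2 i0 i0 i1) (rel i2 i0 i0 i2) (Y2T2 _ H0) (Y2T2 _ H1) (Y2T2 _ H2).
  rewrite /ssign /epar /ipar /=; simp; mem T3_lc; apply: T3_0; at2.
- rewrite (rel i2 i1 i0 i1) (rel i2 i1 i0 i2) /ssign /epar /ipar /=; simp.
  mem T3_lc; first [apply: T3_1; at2 | apply: T3_2; at2 | apply: T3_0; at2].
- rewrite (rel i2 i2 i0 i1) (rel i2 i2 i0 i2) /ssign /epar /ipar /=; simp.
  mem T3_lc; first [apply: T3_1; at2 | apply: T3_2; at2 | apply: T3_0; at2].
Qed.


Lemma simple_typ (vn0 : v != 0)
  (Hgen : forall S, submodule rho S -> S v -> forall x, S x)
  (c : C) (Qv : Q v = c *: v) (c0 : c != 0) : simple_module rho.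
Proof.
split; first by exists v.
move=> S HS.
case: (classic (forall x, S x -> x = 0)) => [H|H]; first by left.
right.
have [x [Sx xn0]] : exists x, S x /\ x <> 0.
  apply: NNPP => Hn; apply: H => x Sx; apply: NNPP => Hx; apply: Hn; by exists x.
suff SYY : S (rho i1 i0 (rho i2 i0 v)).
  apply: Hgen => //.
  have := sub_rho HS i0 i1 _ (sub_rho HS i0 i2 _ SYY).
  rewrite -/(Q v) Qv => H'.
  by have := sub_scale HS c^-1 _ H'; rewrite scalerA mulVf // scale1r.
have [x0 [x1 [x2 [H0 [t1 [t2 [K1 K2 E1]]] [t3 [K3 E3]] Ex]]]] := Hgen TT TT_sub TT_v x.
subst x1 x2.
have S1 : S (rho i1 i0 (rho i2 i0 x0)).
  by have := sub_rho HS i1 i0 _ (sub_rho HS i2 i0 _ Sx); rewrite Ex; pushY; simp.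
case: H0 => [n0 Hn0]; case: (lowering S HS n0 x0 Hn0 S1) => [x00|//].
subst x0.
have S2 : S (rho i1 i0 (rho i2 i0 t1)).
  have := sub_scale HS (-1) _ (sub_rho HS i2 i0 _ Sx); rewrite Ex; pushY; simp.
  done.
case: K1 => [n1 Hn1]; case: (lowering S HS n1 t1 Hn1 S2) => [t10|//].
subst t1.
have S3 : S (rho i1 i0 (rho i2 i0 t2)).
  by have := sub_rho HS i1 i0 _ Sx; rewrite Ex; pushY; simp.
case: K2 => [n2 Hn2]; case: (lowering S HS n2 t2 Hn2 S3) => [t20|//].
subst t2.
have S4 : S (rho i1 i0 (rho i2 i0 t3)) by move: Sx; rewrite Ex; simp.
case: K3 => [n3 Hn3]; case: (lowering S HS n3 t3 Hn3 S4) => [t30|//].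
by exfalso; apply: xn0; rewrite Ex t30; simp.
Qed.

Lemma nonsimple_atyp (vn0 : v != 0) (YYn0 : rho i1 i0 (rho i2 i0 v) != 0)
  (Qv : Q v = 0) : ~ simple_module rho.
Proof.
move=> [_ Hs].
have Qz : forall t, T0 t -> Q t = 0.
  by move=> t Ht; rewrite (Q_T0 0 _ t Ht) ?scale0r // Qv scale0r.
case: (Hs T3 (T3_sub Qz)) => [H|H].
  move/eqP: YYn0; apply; apply: H; apply: T3_0; apply: T2_at; exact: T0_v.
have [z0 [z1 [z2 [H0 H1 H2 Ev]]]] := H v.
have e1 : rho i0 i0 v = ((lam i0) - 2%:R) *: z0 + ((lam i0) - 1) *: rho i0 i1 z1 + ((lam i0) - 1) *: rho i0 i2 z2.
  rewrite {1}Ev !rD (E00_T2 z0) // E00_X1 E00_X2 (E00_T2 z1) // (E00_T2 z2) // !rZ.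
  lcnorm3 (rho i0 i1 z1) (rho i0 i2 z2) z0; ring.
have e2 : rho i0 i0 (rho i0 i0 v) = ((lam i0) - 2%:R) * ((lam i0) - 2%:R) *: z0
   + ((lam i0) - 1) * ((lam i0) - 1) *: rho i0 i1 z1 + ((lam i0) - 1) * ((lam i0) - 1) *: rho i0 i2 z2.
  rewrite e1 !rD !rZ (E00_T2 z0) // E00_X1 E00_X2 (E00_T2 z1) // (E00_T2 z2) // !rZ.
  lcnorm3 (rho i0 i1 z1) (rho i0 i2 z2) z0; ring.
have key : v = ((3%:R - 2%:R * (lam i0)) / 2%:R) *: ((lam i0) *: v - rho i0 i0 v)
     + 2%:R^-1 *: (((lam i0) * (lam i0)) *: v - rho i0 i0 (rho i0 i0 v)).
  rewrite e2 e1 Ev.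
  lcnorm3 (rho i0 i1 z1) (rho i0 i2 z2) z0; field; rewrite ?pnatr_eq0 //.
move: key; rewrite E00v rZ E00v scalerA !subrr !scaler0 addr0 => v0.
by move/eqP: vn0.
Qed.

End Abs.

Lemma atyp_iff (C : numClosedFieldType) (lam : weight C) :
  atypical lam <-> kap C lam = 0.
Proof.
rewrite /kap; split.
  move=> [beta [[i [j [Hp ->]]] H]]; apply/eqP; rewrite oppr_eq0 mulf_eq0; apply/orP.
  move: H; rewrite /wform /rho_w /wadd /wsub /eps.
  case: (ord3 i) (ord3 j) => [->|[->|->]] [->|[->|->]] in Hp * => //= H.
  - by left; apply/eqP; apply: etrans H; ring.
  - by right; apply/eqP; apply: etrans H; ring.
  - by left; rewrite -oppr_eq0; apply/eqP; apply: etrans H; ring.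
  - by right; rewrite -oppr_eq0; apply/eqP; apply: etrans H; ring.
move/eqP; rewrite oppr_eq0 mulf_eq0 => /orP [] /eqP H.
  exists (wsub (eps C i0) (eps C i1)); split; first by exists i0, i1.
  rewrite /wform /rho_w /wadd /wsub /eps /=; apply: etrans H; ring.
exists (wsub (eps C i0) (eps C i2)); split; first by exists i0, i2.
rewrite /wform /rho_w /wadd /wsub /eps /=; apply: etrans H; ring.
Qed.

Lemma b_iff (C : numClosedFieldType) (lam : weight C) :
  chi0_Omega lam = 4%:R * (chi0_z lam ^+ 2 - chi0_z lam) <-> kap C lam = 0.
Proof.
have E : chi0_Omega lam - 4%:R * (chi0_z lam ^+ 2 - chi0_z lam) = 4%:R * kap C lam.
  rewrite /chi0_Omega /chi0_z /kap; field; rewrite ?pnatr_eq0 //.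
split => [H|H].
  by apply/eqP; move: E; rewrite H subrr => /esym/eqP; rewrite mulf_eq0 pnatr_eq0.
by apply/eqP; rewrite -subr_eq0 E H mulr0.
Qed.

Theorem lemma20 (C : numClosedFieldType) (a : C) (lam : weight C)
  (V : lmodType C) (rho : 'I_3 -> 'I_3 -> {linear V -> V}) (v : V) :
  a != 0 ->
  is_Mtilde rho lam a v ->
  let b := chi0_Omega lam in
  let c := chi0_z lam in
  [<-> atypical lam; b = 4%:R * (c ^+ 2 - c); ~ simple_module rho].
Proof.
move=> a0 [Hrep Hwh Hgen Huniv] b c.
have [phi [phiv phic]] := Huniv _ (sigma C a lam) (wv C) (sigma_rep C a lam a0) (wv_rel C a lam a0).
have wtop := wv_top C a lam.
have YYn0 : rho i1 i0 (rho i2 i0 v) != 0.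
  apply/eqP => H; move: wtop; rewrite -phiv -!phic H linear0 eqxx //.
have vn0 : v != 0.
  by apply: contra YYn0 => /eqP ->; rewrite !linear0.
have wn0 : wv C != 0.
  by apply: contra wtop => /eqP ->; rewrite !linear0.
have [c' Hc'] := Qv_ex _ _ _ _ _ _ a0 Hrep Hwh vn0.
have c'k : c' = kap C lam.
  have := congr1 phi Hc'; rewrite /Q !phic phiv (wv_Q C a lam a0) linearZ phiv => /eqP.
  rewrite eq_sym -subr_eq0 -scalerBl scaler_eq0 (negbTE wn0) orbF subr_eq0.
  by move/eqP.
tfae=> [H|H|H].
- by apply/b_iff; apply/atyp_iff.
- apply: (nonsimple_atyp _ _ _ _ _ _ a0 Hrep Hwh vn0 YYn0).
  by rewrite Hc' c'k (proj1 (b_iff C lam) H) scale0r.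
- apply/atyp_iff; apply: NNPP => Hk; apply: H.
  apply: (simple_typ _ _ _ _ _ _ a0 Hrep Hwh vn0 Hgen _ Hc').
  by rewrite c'k; apply/eqP.
Qed.
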